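(* Let $M$ be a $\lambda$-term in head-normal form and $\vec x$ a list of $n$ distinct variables with $FV(M)\subseteq\vec x$. Then $\llbracket M\rrbracket_{\vec x}$ is not the zero distributor, i.e. there exist $\Delta\in(SD)^n$ and $a\in D$ with $\llbracket M\rrbracket_{\vec x}(\Delta,a)\neq\emptyset$.
   Context: A $\lambda$-term is in head-normal form if it has the shape $\lambda y_1\dots\lambda y_m.\,y\,Q_1\cdots Q_p$ ($m,p\ge0$, $y$ a variable). $[n]=\{1,\dots,n\}$. Fix a class $\mathcal C$ of functions between finite ordinals equal to one of: all bijections, all injections, all surjections, all functions. For a small category $X$, $SX$ has finite lists of objects of $X$ as objects and morphisms $\langle x_1,\dots,x_n\rangle\to\langle y_1,\dots,y_m\rangle$ the tuples $\langle\alpha,f_1,\dots,f_m\rangle$ with $\alpha:[m]\to[n]$ in $\mathcal C$, $f_i:x_{\alpha(i)}\to y_i$; composite of $\langle\alpha,\vec f\rangle$ then $\langle\beta,\vec g\rangle$ is $\langle\alpha\circ\beta,(g_i\circ f_{\beta(i)})_i\rangle$; tensor $\oplus$ = concatenation, unit $\langle\rangle$. Fix a small category $A$. $D=D_A$ is the colimit of $D_0=A$, $D_{k+1}=(SD_k)^{o}\times D_k\sqcup A$ along canonical inclusions: objects $a::=o\mid\vec a\Rightarrow a$ ($o\in\mathrm{Ob}(A)$); morphisms are those of $A$ and $\langle\alpha,\vec f\rangle\Rightarrow f:(\vec a\Rightarrow a)\to(\vec a'\Rightarrow a')$ for $\langle\alpha,\vec f\rangle:\vec a'\to\vec a$ in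 $SD$, $f:a\to a'$. $SD=S(D_A)$. Contexts are objects of $(SD)^n$; $\otimes$ is componentwise concatenation; $\Delta\oplus\langle\vec a\rangle$ appends a component. Denotation $\llbracket M\rrbracket_{\vec x}:((SD)^n)^{o}\times D\to\mathrm{Set}$ for $\vec x=\langle x_1..x_n\rangle\supseteq FV(M)$: $\llbracket x_i\rrbracket_{\vec x}(\Delta,a)=(SD)^n(\Delta,\langle\langle\rangle,\dots,\langle a\rangle,\dots,\langle\rangle\rangle)$ ($\langle a\rangle$ at position $i$); $\llbracket\lambda y.P\rrbracket_{\vec x}(\Delta,a)=\llbracket P\rrbracket_{\vec x\oplus\langle y\rangle}(\Delta\oplus\langle\vec a'\rangle,a')$ if $a=\vec a'\Rightarrow a'$, $\emptyset$ if $a$ atomic; $\llbracket PQ\rrbracket_{\vec x}(\Delta,a)=\int^{\vec a=\langle a_1..a_k\rangle\in SD}\int^{\Gamma_0..\Gamma_k\in(SD)^n}\llbracket P\rrbracket_{\vec x}(\Gamma_0,\vec a\Rightarrow a)\times\prod_{i=1}^k\llbracket Q\rrbracket_{\vec x}(\Gamma_i,a_i)\times(SD)^n(\Delta,\bigotimes_{i=0}^k\Gamma_i)$. *)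

(* Defs.v *)
From mathcomp Require Import all_boot.
Set Implicit Arguments.
Unset Strict Implicit.
Unset Printing Implicit Defensive.

(* Small categories (the fixed category A).  comp f g = "g after f".  *)
Record Cat := {
  Ob : Type;
  Hom : Ob -> Ob -> Type;
  idm : forall x, Hom x x;
  comp : forall x y z, Hom x y -> Hom y z -> Hom x z;
  comp_id_l : forall x y (f : Hom x y), comp (idm x) f = f;
  comp_id_r : forall x y (f : Hom x y), comp f (idm y) = f;
  comp_assoc : forall x y z w (f : Hom x y) (g : Hom y z) (h : Hom z w),
      comp (comp f g) h = comp f (comp g h)
}.

(* The class C of functions between finite ordinals [m] -> [n]. *)
Inductive fclass := CBij | CInj | CSurj | CAll.

Definition inC (c : fclass) (m n : nat) (al : 'I_m -> 'I_n) : Prop :=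
  match c with
  | CBij => bijective al
  | CInj => injective al
  | CSurj => forall j : 'I_n, exists i : 'I_m, al i = j
  | CAll => True
  end.

Definition nthT (X : Type) (l : seq X) (i : 'I_(size l)) : X := tnth (in_tuple l) i.
Arguments nthT {X} l i.

Section D.
Variable A : Cat.
Variable c : fclass.

Inductive ty : Type :=
| Atom (o : Ob A)
| Arr (l : seq ty) (a : ty).

(* Morphisms of D: those of A, and <al, f_i> => f : (l => a) -> (l' => a')
   where <al, f_i> : l' -> l in SD  (al : [|l|] -> [|l'|] in C,
   f_i : l'_(al i) -> l_i) and f : a -> a'. *)
Inductive homD : ty -> ty -> Type :=
| hAtom (o o' : Ob A) (f : @Hom A o o') : homD (Atom o) (Atom o')
| hArr (l l' : seq ty) (a a' : ty)
       (al : 'I_(size l) -> 'I_(size l')) (Hal : inC c al)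
       (fs : forall i : 'I_(size l), homD (nthT l' (al i)) (nthT l i))
       (f : homD a a') : homD (Arr l a) (Arr l' a').

(* Morphisms of SD: <x_1..x_n> -> <y_1..y_m> are <al, f_1..f_m>,
   al : [m] -> [n] in C, f_i : x_(al i) -> y_i. *)
Record homS (x y : seq ty) : Type := HomS {
  s_al : 'I_(size y) -> 'I_(size x);
  s_C : inC c s_al;
  s_f : forall i : 'I_(size y), homD (nthT x (s_al i)) (nthT y i)
}.

(* Contexts: objects of (SD)^n. *)
Definition ctx (n : nat) := 'I_n -> seq ty.

Definition homCtx (n : nat) (D G : ctx n) : Type := forall j : 'I_n, homS (D j) (G j).

Definition bigtensor (n k : nat) (G : 'I_k -> ctx n) : ctx n :=
  fun j => flatten [seq G i j | i <- enum 'I_k].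

Definition extc (n : nat) (D : ctx n) (l : seq ty) : ctx n.+1 :=
  fun j => match unlift ord_max j with Some k => D k | None => l end.

Definition unitc (n : nat) (i : 'I_n) (a : ty) : ctx n :=
  fun j => if j == i then [:: a] else [::].

End D.

Inductive term : Type :=
| Var (x : nat)
| Lam (x : nat) (t : term)
| App (t u : term).

Fixpoint fv (t : term) : seq nat :=
  match t with
  | Var x => [:: x]
  | Lam x t => [seq z <- fv t | z != x]
  | App t u => fv t ++ fv u
  end.

Definition lams (ys : seq nat) (t : term) : term := foldr Lam t ys.
Definition apps (t : term) (us : seq term) : term := foldl App t us.

Definition hnf (M : term) : Prop :=
  exists (ys : seq nat) (y : nat) (Qs : seq term), M = lams ys (apps (Var y) Qs).

(* Denotation.  [env] maps a variable name to its position in the list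
   of variables x_1..x_n (None if absent).  Binding y appends y at the
   end (position n+1), shadowing any earlier y (Barendregt convention).
   The coend in the application case is represented by its underlying
   dependent sum. *)
Section Sem.
Variable A : Cat.
Variable c : fclass.

Definition envExt (n : nat) (env : nat -> option 'I_n) (y : nat) : nat -> option 'I_n.+1 :=
  fun z => if z == y then Some ord_max else omap (widen_ord (leqnSn n)) (env z).

Fixpoint sem (M : term) (n : nat) (env : nat -> option 'I_n)
         (D : ctx A n) (a : ty A) {struct M} : Type :=
  match M with
  | Var x =>
      match env x with
      | Some i => homCtx c D (unitc i a)
      | None => Empty_set
      end
  | Lam y P =>
      match a with
      | Arr l a' => sem P (envExt env y) (extc D l) a'
      | Atom _ => Empty_set
      end
  | App P Q =>
      { abar : seq (ty A) &
      { G : 'I_(size abar).+1 -> ctx A n &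
        (sem P env (G ord0) (Arr abar a)
         * (forall i : 'I_(size abar), sem Q env (G (lift ord0 i)) (nthT abar i))
         * homCtx c D (bigtensor G))%type } }
  end.

Definition envOf (xs : seq nat) : nat -> option 'I_(size xs) :=
  fun z => insub (index z xs).

Definition denot (M : term) (xs : seq nat) (D : ctx A (size xs)) (a : ty A) : Type :=
  sem M (envOf xs) D a.

End Sem.
Arguments denot {A} c M xs D a.

(* Main.v *)
Require Import Defs.
From mathcomp Require Import all_boot.
From Stdlib Require Import FunctionalExtensionality.

Section Aux.
Variable A : Cat.
Variable c : fclass.
Variable o : Ob A.

Fixpoint T (k : nat) : ty A := match k with 0 => Atom o | S k => Arr [::] (T k) end.

Lemma inC_id n : inC c (fun i : 'I_n => i).
Proof.
case: c => //=; first by exists id.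
by move=> j; exists j.
Qed.

Lemma inC_0 (al : 'I_0 -> 'I_0) : inC c al.
Proof.
case: c => //=.
- by exists al => i; case: i.
- by move=> i; case: i.
- by move=> j; case: j.
Qed.

Lemma Tid k : homD c (T k) (T k).
Proof.
elim: k => [|k IH] /=; first by apply: hAtom; apply: idm.
apply: (@hArr _ _ [::] [::] _ _ (fun i => i) (inC_0 _)) => //.
by case.
Qed.

Lemma nthT1 (a : ty A) (i : 'I_(size [:: a])) : nthT [:: a] i = a.
Proof. by case: i => [[|]]. Qed.

Lemma homS_T k : homS c [:: T k] [:: T k].
Proof.
apply: (@HomS _ _ _ _ (fun i => i) (inC_id _)).
by move=> i; rewrite nthT1; apply: Tid.
Qed.

Lemma homS_nil : homS c [::] (@nil (ty A)).
Proof.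
apply: (@HomS _ _ _ _ (fun i => i) (inC_id _)).
by case.
Qed.

Lemma homCtx_unit n (i : 'I_n) k : homCtx c (unitc i (T k)) (unitc i (T k)).
Proof.
move=> j; rewrite /unitc; case: (j == i); [exact: homS_T | exact: homS_nil].
Qed.

Lemma big1 n (D : ctx A n) : bigtensor (fun _ : 'I_1 => D) = D.
Proof.
apply: functional_extensionality => j.
rewrite /bigtensor.
have -> : enum 'I_1 = [:: ord0].
  have := size_enum_ord 1; have := enum_uniq 'I_1.
  case: (enum 'I_1) => [|x [|]] //= _ _; congr [:: _]; apply/val_inj; by case: x => [[|]].
by rewrite /= cats0.
Qed.

Lemma app_ok y (Qs : seq term) : forall n (env : nat -> option 'I_n) i k,
  env y = Some i ->
  inhabited (sem c (apps (Var y) Qs) env (unitc i (T (k + size Qs))) (T k)).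
Proof.
elim/last_ind: Qs => [|Qs q IH] n env i k Hy.
  by rewrite /= Hy addn0; constructor; apply: homCtx_unit.
rewrite /apps -cats1 foldl_cat /= -/(apps _ _).
have [h] := IH n env i k.+1 Hy.
constructor; exists [::]; exists (fun _ => unitc i (T (k + size (rcons Qs q)))).
split; [split|].
- by rewrite size_rcons addnS -addSn.
- by case.
- by rewrite big1 cats1; apply: homCtx_unit.
Qed.

Lemma lams_ok y Qs ys : forall n (env : nat -> option 'I_n),
  (y \in ys) || (env y != None) ->
  exists (D : ctx A n) (a : ty A), inhabited (sem c (lams ys (apps (Var y) Qs)) env D a).
Proof.
elim: ys => [|z ys IH] n env /=.
  case E: (env y) => [i|] // _.
  exists (unitc i (T (0 + size Qs))), (T 0); exact: app_ok.
move=> H.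
have H' : (y \in ys) || (envExt env z y != None).
  rewrite /envExt; case: (boolP (y == z)) => [//|yz]; first by rewrite orbT.
  move: H; rewrite in_cons (negbTE yz) /=; case/orP=> [->//|].
  by case: (env y) => //= *; rewrite orbT.
have [D' [a' Hs]] := IH _ _ H'.
exists (fun k => D' (widen_ord (leqnSn n) k)), (Arr (D' ord_max) a') => /=.
have -> : extc (fun k => D' (widen_ord (leqnSn n) k)) (D' ord_max) = D'.
  apply: functional_extensionality => j; rewrite /extc.
  case: unliftP => [k ->|->] //; congr (D' _); apply/val_inj => /=.
  by rewrite /bump leqNgt ltn_ord.
exact: Hs.
Qed.

End Aux.

Lemma fv_apps y Qs : forall t, y \in fv t -> y \in fv (apps t Qs).
Proof.
elim: Qs => [|q Qs IH] t //= H; apply: IH => /=; by rewrite mem_cat H.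
Qed.

Lemma fv_lams y ys t : y \in fv t -> y \notin ys -> y \in fv (lams ys t).
Proof.
elim: ys => [|z ys IH] //= H; rewrite in_cons negb_or => /andP [yz yn].
by rewrite mem_filter yz IH.
Qed.

Theorem lemma3 (A : Cat) (c : fclass) (HA : inhabited (Ob A))
  (M : term) (xs : seq nat) :
  hnf M -> uniq xs -> {subset fv M <= xs} ->
  exists (D : ctx A (size xs)) (a : ty A), inhabited (denot c M xs D a).
Proof.
case: HA => o [ys [y [Qs ->]]] _ Hsub.
rewrite /denot; apply: (@lams_ok A c o y Qs ys (size xs) (envOf xs)).
case: (boolP (y \in ys)) => //= yn.
have /Hsub : y \in fv (lams ys (apps (Var y) Qs)).
  by apply: fv_lams => //; apply: fv_apps; rewrite /= inE.
move=> yx; by rewrite /envOf insubT ?index_mem.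
Qed.
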